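(* Let $X$ be a $p\times 1$ random vector with finite moments up to the fourth order and invertible covariance matrix $\Sigma$, let $X_1,\dots,X_n$ be independent samples of $X$, let $\Omega$ be the normalized inverse covariance matrix of $X$ with eigenvalues $\lambda_1,\dots,\lambda_p$, and let $\hat\Omega$ be the sample normalized inverse covariance matrix. Assume that all expectations involved exist and that $\mathrm{E}[\hat\Omega]=\Omega$. For $\rho\in\mathbb{R}$ put $\Omega^*=(1-\rho)\hat\Omega+\rho I_p$. Then the value $\rho^*$ of $\rho$ minimizing $\mathrm{E}\big[\|\Omega^*-\Omega\|_F^2\big]$ is \[ \rho^*=\frac{\mathrm{tr}(\Sigma_{\hat\Omega})}{\mathrm{tr}(\Sigma_{\hat\Omega})+\mathrm{tr}(\Omega^2)-p}=\frac{\mathrm{tr}(\Sigma_{\hat\Omega})}{\mathrm{tr}(\Sigma_{\hat\Omega})+\sum_{i=1}^p\lambda_i^2-p}, \] where $\Sigma_{\hat\Omega}$ is the $p^2\times p^2$ covariance matrix of $\mathrm{vec}(\hat\Omega)$.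
   Context: For a random vector $X$ with covariance $\Sigma$ (invertible), $P=\Sigma^{-1}$, $P_d$ is the diagonal matrix with the diagonal entries of $P$, and the normalized inverse covariance matrix is $\Omega=P_d^{-1/2}PP_d^{-1/2}$. Given samples $X_1,\dots,X_n$, $\hat\Sigma=\frac1n\sum_{i=1}^n(X_i-\bar X)(X_i-\bar X)^T$ (assumed nonsingular), $\hat P=\hat\Sigma^{-1}$, $\hat P_d$ its diagonal part, and $\hat\Omega=\hat P_d^{-1/2}\hat P\hat P_d^{-1/2}$. $\mathrm{vec}(A)$ stacks the columns of $A$ into one vector. For a $p\times p$ matrix $A$, $\|A\|_F^2=\mathrm{tr}(A^TA)/p$ (scaled squared Frobenius norm). *)

(* Defs.v *)
From HB Require Import structures.
From mathcomp Require Import all_boot all_order all_algebra.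
From mathcomp Require Import all_classical all_reals all_analysis.
Set Implicit Arguments. Unset Strict Implicit. Unset Printing Implicit Defensive.
Import Order.TTheory GRing.Theory Num.Theory.
Local Open Scope ring_scope.
Local Open Scope classical_set_scope.

(* column-stacking vectorization vec(A) *)
Definition vecmx (R : Type) (p : nat) (A : 'M[R]_p) : 'cV[R]_(p * p) :=
  (mxvec A^T)^T.

Definition diag_invsqrt (R : rcfType) (p : nat) (M : 'M[R]_p) : 'M[R]_p :=
  diag_mx (\row_i (Num.sqrt (M i i))^-1).

Definition normalize (R : rcfType) (p : nat) (M : 'M[R]_p) : 'M[R]_p :=
  diag_invsqrt M *m M *m diag_invsqrt M.

Definition norm_inv_cov (R : rcfType) (p : nat) (S : 'M[R]_p) : 'M[R]_p :=
  normalize (invmx S).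

Definition frob2 (R : fieldType) (p : nat) (A : 'M[R]_p) : R :=
  \tr (A^T *m A) / p%:R.

Definition covmx d (T : measurableType d) (R : realType) (P : probability T R)
  (m : nat) (Y : 'I_m -> T -> R) : 'M[R]_m :=
  \matrix_(i, j) fine (covariance P (Y i) (Y j)).

Definition sample_mean (R : fieldType) (n p : nat) (x : 'I_n -> 'cV[R]_p) : 'cV[R]_p :=
  n%:R^-1 *: \sum_(i < n) x i.

Definition sample_cov (R : fieldType) (n p : nat) (x : 'I_n -> 'cV[R]_p) : 'M[R]_p :=
  n%:R^-1 *: \sum_(i < n) ((x i - sample_mean x) *m (x i - sample_mean x)^T).

(* independence of random vectors X_1..X_n (product rule on measurable rectangles,
   which generate the product sigma-algebra of R^p) *)
Definition independent_vecs d (T : measurableType d) (R : realType) (P : probability T R)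
  (n p : nat) (Xs : 'I_n -> T -> 'cV[R]_p) : Prop :=
  forall B : 'I_n -> 'I_p -> set R, (forall i k, measurable (B i k)) ->
    P [set w | forall i k, B i k (Xs i w k ord0)] =
    (\prod_(i < n) P [set w | forall k, B i k (Xs i w k ord0)])%E.

Definition same_distribution d (T : measurableType d) (R : realType) (P : probability T R)
  (p : nat) (X Y : T -> 'cV[R]_p) : Prop :=
  forall B : 'I_p -> set R, (forall k, measurable (B k)) ->
    P [set w | forall k, B k (Y w k ord0)] = P [set w | forall k, B k (X w k ord0)].

(* Main.v *)
Require Import Defs.
From HB Require Import structures.
From mathcomp Require Import all_boot all_order all_algebra.
From mathcomp Require Import all_classical all_reals all_analysis.
From mathcomp Require Import measurable_realfun.
From mathcomp Require Import ring lra.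
Set Implicit Arguments. Unset Strict Implicit. Unset Printing Implicit Defensive.
Import Order.TTheory GRing.Theory Num.Theory.
Local Open Scope ring_scope.
Local Open Scope classical_set_scope.
Section S.
Context d (T : measurableType d) (R : realType) (P : probability T R).

Lemma L2_of_sq (Y : T -> R) : measurable_fun setT Y ->
  P.-integrable setT (fun w => ((Y w) ^+ 2)%:E) -> Y \in Lfun P 2%:E.
Proof.
move=> mY iY; rewrite inE; apply/andP; split; first by rewrite inE.
rewrite inE /= /finite_norm unlock /Lnorm; apply: poweR_lty.
move/integrableP: iY => [_ +]; apply: le_lt_trans.
apply: ge0_le_integral => //.
- by move=> x _; rewrite lee_fin powR_ge0.
- apply/measurable_EFinP.
  apply/(@measurableT_comp _ _ _ _ _ _ (fun x : R => x `^ 2)%R) => //.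
  exact/measurableT_comp.
- apply/measurable_EFinP; apply: measurableT_comp => //.
  exact: measurable_funX.
- by move=> t _ /=; rewrite lee_fin (@powR_mulrn _ _ 2) // normrX.
Qed.

Lemma E_sum (I : finType) (F : I -> T -> R) : (forall i, F i \in Lfun P 1) ->
  ('E_P[fun w => (\sum_i F i w)%R] = \sum_i 'E_P[F i])%E.
Proof.
move=> h; rewrite unlock.
under eq_integral do rewrite -sumEFin.
rewrite integral_sum //.
by move=> i; apply/Lfun1_integrable.
Qed.


Lemma E_entry (Y : T -> R) (c a b : R) : Y \in Lfun P 2%:E -> ('E_P[Y] = c%:E)%E ->
  (fun w => (a * (Y w - c) + b) ^+ 2) \in Lfun P 1 /\
  ('E_P[fun w => ((a * (Y w - c) + b) ^+ 2)%R] =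
    (a ^+ 2 * fine (covariance P Y Y) + b ^+ 2)%:E)%E.
Proof.
move=> Y2 EY.
have fin : P setT \is a fin_num by rewrite probability_setT.
pose Z := (Y \- cst c)%R.
have Z2 : Z \in Lfun P 2%:E by rewrite rpredB // ?lee1n //= => _; rewrite Lfun_cst.
have Z1 : Z \in Lfun P 1 by apply: (Lfun_subset12 fin).
have ZZ : (Z \* Z)%R \in Lfun P 1 by apply: Lfun2_mul_Lfun1.
have Y1 : Y \in Lfun P 1 by apply: (Lfun_subset12 fin).
have EZ : ('E_P[Z] = 0)%E.
  by rewrite expectationB ?Lfun_cst // EY expectation_cst subee.
have cov : covariance P Y Y = ('E_P[Z \* Z]%R)%E.
  by rewrite unlock EY /=.
have -> : (fun w => (a * (Y w - c) + b) ^+ 2) =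
   ((a ^+ 2) \o* (Z \* Z) \+ (2 * a * b) \o* Z \+ cst (b ^+ 2))%R.
  by apply/funext => w /=; rewrite /Z /=; ring.
have A1 : ((a ^+ 2) \o* (Z \* Z))%R \in Lfun P 1 by apply: Lfun_scale.
have A2 : ((2 * a * b) \o* Z)%R \in Lfun P 1 by apply: Lfun_scale.
split; first by rewrite !rpredD // Lfun_cst.
rewrite expectationD ?rpredD ?Lfun_cst // expectationD //.
rewrite expectation_cst !expectationZl // EZ mule0 adde0 cov.
have fz : ('E_P[(Z \* Z)%R] \is a fin_num)%E by apply: expectation_fin_num.
by rewrite -(fineK fz) -EFinM -EFinD fineK.
Qed.

Lemma Lfun_sum (I : finType) (F : I -> T -> R) : (forall i, F i \in Lfun P 1) ->
  (fun w => \sum_i F i w) \in Lfun P 1.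
Proof.
move=> h; apply/Lfun1_integrable.
have : P.-integrable setT (fun w => (\sum_i (F i w)%:E)%E).
  by apply: integrable_sum => // i _; apply/Lfun1_integrable.
by apply: eq_integrable => // w _ /=; rewrite sumEFin.
Qed.

End S.

Section CP.
Variable (R : comNzRingType).

Lemma map_comp_polyC n (q : {poly R}) (A : 'M[R]_n) :
  map_mx (comp_poly q) (map_mx polyC A) = map_mx polyC A.
Proof. by apply/matrixP => i j; rewrite !mxE comp_polyC. Qed.

Lemma char_poly_sqr n (M : 'M[R]_n) :
  char_poly (M *m M) \Po 'X^2 =
  char_poly M * ((-1) ^+ n * (char_poly M \Po (- 'X))).
Proof.
set Mp := map_mx polyC M.
have e1 : map_mx (comp_poly ('X^2)) (char_poly_mx (M *m M)) =
          ('X%:M - Mp) *m ('X%:M + Mp).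
  rewrite /char_poly_mx map_mxB map_scalar_mx /= comp_polyX map_comp_polyC map_mxM.
  rewrite mulmxDr !mulmxBl -scalar_mxM -expr2 -/Mp [Mp *m _%:M]scalar_mxC.
  by rewrite addrA subrK.
have e2 : map_mx (comp_poly (- 'X)) (char_poly_mx M) = (-1) *: ('X%:M + Mp).
  rewrite /char_poly_mx map_mxB map_scalar_mx /= comp_polyX map_comp_polyC -/Mp.
  by rewrite scaleN1r opprD; congr (_ - _); apply/matrixP => i j; rewrite !mxE mulNrn.
rewrite /char_poly -!det_map_mx e1 e2 det_mulmx detZ.
congr (_ * _); by rewrite mulrA -expr2 -exprM mulnC exprM sqrrN !expr1n mul1r.
Qed.

Lemma comp_X2_inj (p q : {poly R}) : p \Po 'X^2 = q \Po 'X^2 -> p = q.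
Proof.
move=> h; apply/polyP => i.
have := congr1 (fun r : {poly R} => r`_(i * 2)) h.
by rewrite /= !coef_comp_poly_Xn // dvdn_mull // mulnK.
Qed.

End CP.

Lemma tr_sqr_eigen (R : fieldType) n (A : 'M[R]_n) (lam : 'I_n -> R) : (0 < n)%N ->
  char_poly A = \prod_(i < n) ('X - (lam i)%:P) ->
  \tr (A *m A) = \sum_(i < n) lam i ^+ 2.
Proof.
move=> n0 h.
pose D := diag_mx (\row_i lam i).
have hD : char_poly D = char_poly A.
  by rewrite h char_poly_trig ?diag_mx_is_trig //; apply: eq_bigr => i _; rewrite !mxE eqxx mulr1n.
have : char_poly (A *m A) = char_poly (D *m D).
  by apply: comp_X2_inj; rewrite !char_poly_sqr hD.
move/(congr1 (fun p : {poly R} => p`_n.-1)).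
rewrite !char_poly_trace // => /eqP; rewrite eqr_opp => /eqP ->.
rewrite /D mul_mx_diag /mxtrace; apply: eq_bigr => i _.
by rewrite !mxE eqxx mulr1n expr2.
Qed.

Lemma normalizeE (R : rcfType) p (M : 'M[R]_p) i j :
  normalize M i j = (Num.sqrt (M i i))^-1 * M i j * (Num.sqrt (M j j))^-1.
Proof.
by rewrite /normalize /diag_invsqrt mul_mx_diag mxE mul_diag_mx !mxE.
Qed.

Lemma normalize_diag (R : rcfType) p (M : 'M[R]_p) i :
  0 < M i i -> normalize M i i = 1.
Proof.
move=> h; rewrite normalizeE mulrAC -invfM -expr2 sqr_sqrtr ?ltW //.
by rewrite mulVf // gt_eqF.
Qed.

Lemma normalize_tr (R : rcfType) p (M : 'M[R]_p) :
  M^T = M -> (normalize M)^T = normalize M.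
Proof.
move=> hM; apply/matrixP => i j; rewrite mxE !normalizeE.
have -> : M j i = M i j by rewrite -[in LHS]hM mxE.
by rewrite [LHS]mulrC mulrA mulrAC.
Qed.

Lemma psd_inv_diag (R : rcfType) p (I : finType) (s : R) (z : I -> 'cV[R]_p) i :
  0 <= s -> s *: \sum_l (z l *m (z l)^T) \in unitmx ->
  0 < invmx (s *: \sum_l (z l *m (z l)^T)) i i.
Proof.
set S := s *: _ => s0 uS.
set Q := invmx S.
pose e : 'cV[R]_p := delta_mx i ord0.
pose y := Q *m e.
have Sy : S *m y = e by rewrite /y mulmxA mulmxV // mul1mx.
pose u l := ((z l)^T *m y) ord0 ord0.
have Sy2 : S *m y = s *: \sum_l (u l *: z l).
  rewrite /S -scalemxAl mulmx_suml; congr (_ *: _); apply: eq_bigr => l _.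
  rewrite -mulmxA; apply/matrixP => a b; rewrite !mxE big_ord1 !mxE.
  by rewrite (ord1 b) mulrC /u !mxE.
have yS : (y^T *m (S *m y)) ord0 ord0 = Q i i.
  by rewrite Sy /y trmx_mul trmx_delta /e -rowE -colE !mxE.
have uT l : (y^T *m z l) ord0 ord0 = u l.
  by rewrite /u -{1}(trmxK (z l)) -trmx_mul mxE.
have yS2 : (y^T *m (S *m y)) ord0 ord0 = s * \sum_l u l ^+ 2.
  rewrite Sy2 -scalemxAr mulmx_sumr mxE summxE; congr (_ * _).
  by apply: eq_bigr => l _; rewrite -scalemxAr mxE uT expr2.
have ge : 0 <= Q i i by rewrite -yS yS2 mulr_ge0 // sumr_ge0 // => l _; exact: sqr_ge0.
rewrite lt_def ge andbT; apply/eqP => Q0.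
have : e != 0.
  by apply/eqP => /matrixP /(_ i ord0); rewrite !mxE !eqxx /= => /eqP; rewrite oner_eq0.
rewrite -Sy Sy2; apply/negP; rewrite negbK.
move: Q0; rewrite -yS yS2 => /eqP; rewrite mulf_eq0 => /orP[/eqP->|]; first by rewrite scale0r.
rewrite psumr_eq0 => [/allP hu|l _]; last exact: sqr_ge0.
rewrite big1 ?scaler0 // => l _.
have := hu l (mem_index_enum l); rewrite sqrf_eq0 => /eqP ->.
by rewrite scale0r.
Qed.

Theorem theorem2 (d : measure_display) (T : measurableType d) (R : realType)
  (P : probability T R) (p n : nat)
  (X : T -> 'cV[R]_p) (Xs : 'I_n -> T -> 'cV[R]_p) (lambda : 'I_p -> R)
  (* X is a random vector with finite fourth moments *)
  (hXmeas : forall k, measurable_fun setT (fun w => X w k ord0))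
  (hX4 : forall k, P.-integrable setT (fun w => ((X w k ord0) ^+ 4)%:E))
  (* its covariance matrix is invertible *)
  (hSigma : covmx P (fun k w => X w k ord0) \in unitmx)
  (* X_1,...,X_n are independent samples of X *)
  (hXsmeas : forall i k, measurable_fun setT (fun w => Xs i w k ord0))
  (hind : independent_vecs P Xs)
  (hdist : forall i, same_distribution P X (Xs i))
  (* the sample covariance matrix is nonsingular *)
  (hSigmahat : forall w, sample_cov (fun i => Xs i w) \in unitmx)
  (* lambda_1..lambda_p are the eigenvalues of Omega (with multiplicity) *)
  (hlambda : char_poly (norm_inv_cov (covmx P (fun k w => X w k ord0)))
             = \prod_(i < p) ('X - (lambda i)%:P))
  (* all expectations involved exist *)
  (hOmeas : forall i j, measurable_fun setT
      (fun w => norm_inv_cov (sample_cov (fun l => Xs l w)) i j))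
  (hO2 : forall i j, P.-integrable setT
      (fun w => ((norm_inv_cov (sample_cov (fun l => Xs l w)) i j) ^+ 2)%:E))
  (* E[Omegahat] = Omega *)
  (hunb : forall i j, ('E_P[fun w => norm_inv_cov (sample_cov (fun l => Xs l w)) i j])%E
          = (norm_inv_cov (covmx P (fun k w => X w k ord0)) i j)%:E)
  (* the formula for rho* is well defined *)
  (hden : let Omega := norm_inv_cov (covmx P (fun k w => X w k ord0)) in
          let trS := \tr (covmx P (fun k w =>
                       vecmx (norm_inv_cov (sample_cov (fun l => Xs l w))) k ord0)) in
          trS + \tr (Omega *m Omega) - p%:R != 0) :
  let Omega := norm_inv_cov (covmx P (fun k w => X w k ord0)) in
  let Omegahat := fun w => norm_inv_cov (sample_cov (fun l => Xs l w)) in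
  let trS := \tr (covmx P (fun k w => vecmx (Omegahat w) k ord0)) in
  let J := fun rho : R =>
    ('E_P[fun w => frob2 ((1 - rho) *: Omegahat w + rho *: 1%:M - Omega)])%E in
  let rhostar := trS / (trS + \tr (Omega *m Omega) - p%:R) in
  (forall rho, (J rhostar <= J rho)%E) /\
  (forall rho, (forall r, (J rho <= J r)%E) -> rho = rhostar) /\
  rhostar = trS / (trS + \sum_(i < p) lambda i ^+ 2 - p%:R).
Proof.
move=> Omega Omegahat trS J rhostar.
have tr0 m (M : 'M[R]_m) : m = 0%N -> \tr M = 0.
  by move=> m0; rewrite /mxtrace big1 // => i _; have := ltn_ord i; rewrite {2}m0.
have p0 : (0 < p)%N.
  rewrite lt0n; apply/eqP => p0; move: hden => /=.
  by rewrite !tr0 ?p0 // subr0 addr0 eqxx.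
have Yd w i : Omegahat w i i = 1.
  rewrite /Omegahat /norm_inv_cov normalize_diag // /sample_cov.
  apply: (psd_inv_diag (z := fun l => Xs l w - sample_mean (fun i => Xs i w))).
    by rewrite invr_ge0 ler0n.
  exact: (hSigmahat w).
have Od i : Omega i i = 1.
  have := hunb i i.
  rewrite (_ : (fun w => _) = cst 1); last by apply/funext => w; exact: Yd.
  by rewrite expectation_cst => -[].
have Osym : Omega^T = Omega.
  rewrite /Omega /norm_inv_cov normalize_tr // trmx_inv; congr invmx.
  by apply/matrixP => i j; rewrite !mxE covarianceC.
have Y2 i j : (fun w => Omegahat w i j) \in Lfun P 2%:E.
  exact: L2_of_sq (hOmeas i j) (hO2 i j).
pose v i j := fine (covariance P (fun w => Omegahat w i j) (fun w => Omegahat w i j)).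
pose A := \sum_i \sum_j v i j.
pose B := \sum_i \sum_j ((i == j)%:R - Omega i j) ^+ 2.
pose g rho i j w := ((1 - rho) * (Omegahat w i j - Omega i j) +
                     rho * ((i == j)%:R - Omega i j)) ^+ 2.
have Ent rho i j := E_entry (1 - rho) (rho * ((i == j)%:R - Omega i j)) (Y2 i j) (hunb i j).
have gL rho i j : g rho i j \in Lfun P 1 := (Ent rho i j).1.
have gE rho i j : ('E_P[g rho i j] = ((1 - rho) ^+ 2 * v i j + (rho * ((i == j)%:R - Omega i j)) ^+ 2)%:E)%E
  := (Ent rho i j).2.
have hJ rho : J rho = (((1 - rho) ^+ 2 * A + rho ^+ 2 * B) / p%:R)%:E.
  rewrite /J.
  have -> : (fun w => frob2 ((1 - rho) *: Omegahat w + rho *: 1%:M - Omega)) =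
     (p%:R^-1 \o* (fun w => \sum_i \sum_j g rho i j w))%R.
    apply/funext => w; rewrite /frob2 /mxtrace /=; congr (_ * _).
    under eq_bigr => i _ do rewrite mxE. rewrite exchange_big; apply: eq_bigr => i _; apply: eq_bigr => j _.
    rewrite /g !mxE; ring.
  rewrite expectationZl; last by apply: Lfun_sum => i; apply: Lfun_sum => j.
  rewrite E_sum; last by move=> i; apply: Lfun_sum => j.
  under eq_bigr => i _ do rewrite E_sum //.
  under eq_bigr => i _ do under eq_bigr => j _ do rewrite gE.
  under eq_bigr => i _ do rewrite sumEFin.
  rewrite sumEFin -EFinM mulrC; congr (_ %:E); congr (_ / _).
  rewrite /A /B !mulr_sumr -big_split /=; apply: eq_bigr => i _.
  rewrite !mulr_sumr -big_split /=; apply: eq_bigr => j _.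
  by rewrite exprMn.
have hA : trS = A.
  rewrite /trS /mxtrace (reindex (uncurry (@mxvec_index p p))) /=; last first.
    exact: curry_mxvec_bij.
  rewrite /A exchange_big pair_big /=; apply: eq_bigr => -[i j] _ /=.
  rewrite /covmx mxE /v.
  have -> : (fun w => vecmx (Omegahat w) (mxvec_index i j) ord0) = (fun w => Omegahat w j i).
    by apply/funext => w; rewrite /vecmx [LHS]mxE mxvecE mxE.
  by [].
have hB : B = \tr (Omega *m Omega) - p%:R.
  have -> : p%:R = \sum_(i < p) (1 : R) by rewrite sumr_const card_ord.
  rewrite /B /mxtrace -sumrB.
  apply: eq_bigr => i _; rewrite mxE (bigD1 i) //= [in RHS](bigD1 i) //= eqxx Od.
  rewrite subrr expr0n /= add0r mulr1 addrAC subrr add0r.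
  apply: eq_bigr => j /negbTE ji; rewrite eq_sym ji sub0r sqrrN expr2.
  have Os a b : Omega a b = Omega b a by rewrite -{1}Osym mxE.
  by rewrite (Os j i).
have A0 : 0 <= A.
  by apply: sumr_ge0 => i _; apply: sumr_ge0 => j _; apply: fine_ge0; exact: variance_ge0.
have B0 : 0 <= B.
  by apply: sumr_ge0 => i _; apply: sumr_ge0 => j _; exact: sqr_ge0.
have hd : A + B != 0.
  have := hden; rewrite /= -/Omega -/Omegahat -/trS hA hB addrA //.
have ABpos : 0 < A + B by rewrite lt_def hd addr_ge0.
have hr : rhostar = A / (A + B) by rewrite /rhostar hA hB addrA.
have key rho : (1 - rho) ^+ 2 * A + rho ^+ 2 * B =
    (A + B) * (rho - A / (A + B)) ^+ 2 + A * B / (A + B).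
  by field.
have pinv : 0 < p%:R^-1 :> R by rewrite invr_gt0 ltr0n.
split; [|split].
- move=> rho; rewrite !hJ lee_fin ler_pM2r // !key hr subrr expr0n /= mulr0 add0r.
  by rewrite lerDr mulr_ge0 ?sqr_ge0 // ltW.
- move=> rho h; have := h rhostar.
  rewrite !hJ lee_fin ler_pM2r // !key hr subrr expr0n /= mulr0 add0r.
  rewrite gerDr pmulr_rle0 // => hle.
  apply/eqP; rewrite -subr_eq0 -sqrf_eq0 eq_le hle sqr_ge0.
  done.
- by rewrite /rhostar (tr_sqr_eigen p0 hlambda).
Qed.
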